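(* Let $G=(V,E)$ be a simple biconnected graph and let $w$ be a vertex such that the set $F$ of edges of $G-w$ is a flacet of the graphic matroid $\mathcal{M}(G)$. Then $F$ is $k$-level if and only if $\deg(w)=k$.
   Context: The graphic matroid $\mathcal{M}(G)$ has ground set $E$ and bases the spanning forests (spanning trees, for connected $G$). A flacet of a matroid $\mathcal{M}$ on $E$ is a flat $\emptyset\neq S\subsetneq E$ (i.e. $\operatorname{rk}(S)<\operatorname{rk}(S\cup e)$ for all $e\notin S$) such that the restriction $\mathcal{M}|_S$ and the contraction $\mathcal{M}/S$ are connected matroids. A flacet $F$ is $k$-level if the function $\ell_F(x)=\sum_{e\in F}x_e$ takes exactly $k$ distinct values on the base configuration $\{\mathbf{1}_B: B \text{ a basis}\}\subset\mathbb{R}^E$. *)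

(* Defs.v *)
From mathcomp Require Import all_boot.
Set Implicit Arguments. Unset Strict Implicit. Unset Printing Implicit Defensive.

Section Graphic.
Variables (T : finType) (e : rel T).

Definition simple_graph := symmetric e /\ irreflexive e.

Definition edges : {set {set T}} := [set [set x; y] | x in T, y in T & e x y].

Definition induced_connected (A : {set T}) : Prop :=
  forall x y, x \in A -> y \in A ->
    connect (fun u v => [&& e u v, u \in A & v \in A]) x y.

Definition graph_connected : Prop := induced_connected setT.

Definition biconnected : Prop :=
  graph_connected /\ forall v : T, induced_connected (setT :\ v).

Definition degree (w : T) : nat := #|[set v | e w v]|.

Definition edges_avoiding (w : T) : {set {set T}} := [set f in edges | w \notin f].

Definition adj_in (S : {set {set T}}) : rel T := fun x y => [set x; y] \in S.
Definition n_components (S : {set {set T}}) : nat :=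
  #|[set [set y | connect (adj_in (S :&: edges)) x y] | x : T]|.
Definition grank (S : {set {set T}}) : nat := #|T| - n_components S.

Definition is_basis (B : {set {set T}}) : bool :=
  (B \subset edges) && (#|B| == grank B) && (grank B == grank edges).

Definition is_flat (S : {set {set T}}) : Prop :=
  S \subset edges /\
  forall f, f \in edges -> f \notin S -> grank S < grank (f |: S).

(* A matroid on ground set X with rank function r is connected iff it has no
   nontrivial separator: r A + r (X \ A) > r X for every nonempty proper A. *)
Definition matroid_connected (X : {set {set T}}) (r : {set {set T}} -> nat) : Prop :=
  forall A : {set {set T}}, A \subset X -> A != set0 -> A != X -> r X < r A + r (X :\: A).

(* Restriction M|S: ground S, rank grank.  Contraction M/S: ground E \ S,
   rank X |-> grank (X :|: S) - grank S. *)
Definition restriction_connected (S : {set {set T}}) : Prop :=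
  matroid_connected S grank.
Definition contraction_connected (S : {set {set T}}) : Prop :=
  matroid_connected (edges :\: S) (fun X => grank (X :|: S) - grank S).

Definition is_flacet (S : {set {set T}}) : Prop :=
  [/\ S != set0, S \proper edges, is_flat S,
      restriction_connected S & contraction_connected S].

(* Number of distinct values of l_F(1_B) = |B ∩ F| over bases B. *)
Definition num_levels (F : {set {set T}}) : nat :=
  size (undup [seq #|B :&: F| | B <- enum is_basis]).

Definition k_level (F : {set {set T}}) (k : nat) : Prop := num_levels F = k.

End Graphic.

(* Main.v *)
Require Import Defs.
From mathcomp Require Import all_boot zify.
Set Implicit Arguments. Unset Strict Implicit. Unset Printing Implicit Defensive.

Section Gen.
Variable T : finType.

Definition cls (r : rel T) (a : T) : {set T} := [set z | connect r a z].
Definition ncl (r : rel T) := #|[set cls r a | a : T]|.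

Lemma connect_ind' (r : rel T) (a : T) (P : T -> Prop) :
  P a -> (forall b c, P b -> r b c -> P c) -> forall b, connect r a b -> P b.
Proof.
move=> Pa step b /connectP [p pth ->] {b}.
elim: p a Pa pth => [|c p IH] a0 Pa0 //= /andP [rac pth].
exact: IH (step _ _ Pa0 rac) pth.
Qed.

Lemma connect_noout (r : rel T) v z : (forall u, ~~ r v u) -> connect r v z -> z = v.
Proof.
move=> h /connectP [[|c p] //= /andP [rvc _]].
by rewrite (negbTE (h c)) in rvc.
Qed.

Lemma ncl_empty (r : rel T) : (forall u v, ~~ r u v) -> ncl r = #|T|.
Proof.
move=> h; rewrite /ncl.
have -> : [set cls r a | a : T] = [set [set a] | a : T].
  apply: eq_imset => a; apply/setP => z; rewrite !inE.
  apply/idP/eqP => [/(connect_noout (h a)) -> // | ->]; exact: connect0.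
rewrite card_imset ?cardsT //; exact: set1_inj.
Qed.

Lemma ncl_one (r : rel T) (w : T) : (forall a b, connect r a b) -> ncl r = 1.
Proof.
move=> h; apply/eqP/cards1P; exists setT; apply/setP => C; rewrite !inE.
apply/imsetP/eqP => [[a _ ->]|->].
  by apply/setP => z; rewrite !inE h.
by exists w => //; apply/setP => z; rewrite !inE h.
Qed.

Lemma ncl_one_conn (r : rel T) a b : ncl r = 1 -> connect r a b.
Proof.
move/eqP/cards1P => [C0 hC].
have ha : cls r a \in [set C0] by rewrite -hC; apply: imset_f.
have hb : cls r b \in [set C0] by rewrite -hC; apply: imset_f.
move: ha hb; rewrite !inE => /eqP ha /eqP hb.
have : b \in cls r b by rewrite inE connect0.
by rewrite hb -ha inE.
Qed.

Section Merge.
Variables (r r' : rel T) (x y : T).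
Hypothesis rsym : symmetric r.
Hypothesis nxy : ~~ connect r x y.
Hypothesis hr' : forall u v, r' u v = [|| r u v, (u == x) && (v == y) | (u == y) && (v == x)].

Let csym := sym_connect_sym rsym.

Lemma conn' a b : connect r' a b =
  [|| connect r a b, connect r a x && connect r y b | connect r a y && connect r x b].
Proof.
apply/idP/idP.
  move=> H; apply: (connect_ind' (P := fun b => is_true [|| connect r a b, connect r a x && connect r y b | connect r a y && connect r x b])) H.
    by rewrite connect0.
  move=> b0 c H; rewrite hr' => /or3P [rbc | /andP[/eqP eb /eqP ec] | /andP[/eqP eb /eqP ec]].
  - case/or3P: H => [h | /andP[h1 h2] | /andP[h1 h2]]; apply/or3P.
    + by constructor 1; apply: connect_trans h (connect1 rbc).
    + by constructor 2; rewrite h1 (connect_trans h2 (connect1 rbc)).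
    + by constructor 3; rewrite h1 (connect_trans h2 (connect1 rbc)).
  - subst b0 c; case/or3P: H => [h | /andP[h1 h2] | /andP[h1 h2]]; apply/or3P.
    + by constructor 2; rewrite h connect0.
    + by constructor 2; rewrite h1 connect0.
    + by constructor 1.
  - subst b0 c; case/or3P: H => [h | /andP[h1 h2] | /andP[h1 h2]]; apply/or3P.
    + by constructor 3; rewrite h connect0.
    + by constructor 1.
    + by constructor 3; rewrite h1 connect0.
have sub : subrel r (connect r').
  by move=> u v ruv; apply: connect1; rewrite hr' ruv.
have exy : connect r' x y by apply: connect1; rewrite hr' !eqxx orbT.
have eyx : connect r' y x by apply: connect1; rewrite hr' !eqxx !orbT.
case/or3P => [h | /andP[h1 h2] | /andP[h1 h2]].
- exact: connect_sub h.
- apply: connect_trans (connect_sub sub h1) _.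
  exact: connect_trans exy (connect_sub sub h2).
- apply: connect_trans (connect_sub sub h1) _.
  exact: connect_trans eyx (connect_sub sub h2).
Qed.

Lemma cls' a : cls r' a =
  if connect r a x || connect r a y then cls r x :|: cls r y else cls r a.
Proof.
apply/setP => z; rewrite !inE conn'.
case: (boolP (connect r a x)) => ax /=.
  have ay : connect r a y = false.
    apply/negbTE; apply: contra nxy => ay.
    by apply: connect_trans ay; rewrite csym.
  by rewrite ay /= orbF (same_connect csym ax) !inE.
case: (boolP (connect r a y)) => ay /=.
  by rewrite (same_connect csym ay) !inE orbC.
by rewrite !inE orbF.
Qed.

Lemma ncl_merge : ncl r' + 1 = ncl r.
Proof.
set K := [set cls r a | a : T].
set Cx := cls r x; set Cy := cls r y.
have xCx : x \in Cx by rewrite inE connect0.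
have yCy : y \in Cy by rewrite inE connect0.
have cls_eq a b : connect r a b -> cls r a = cls r b.
  by move=> h; apply/setP => z; rewrite !inE (same_connect csym h).
have inC a z : z \in cls r a = connect r a z by rewrite inE.
have neq : Cx != Cy.
  apply: contra nxy => /eqP h; by rewrite -inC -/Cx h.
have nU : Cx :|: Cy \notin K :\: [set Cx; Cy].
  apply/negP; rewrite !inE => /andP [_ /imsetP [a _ ha]].
  have hx : x \in cls r a by rewrite -ha inE xCx.
  have hy : y \in cls r a by rewrite -ha inE yCy orbT.
  move: hx hy; rewrite !inC => hx hy; apply/negP: nxy; apply/negPn.
  by apply: connect_trans hy; rewrite csym.
have eK : [set cls r' a | a : T] = (Cx :|: Cy) |: (K :\: [set Cx; Cy]).
  apply/setP => C; rewrite !inE; apply/imsetP/idP.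
    move=> [a _ ->]; rewrite cls'.
    case: ifPn => [_|]; first by rewrite eqxx.
    rewrite negb_or => /andP [ax ay]; apply/orP; right.
    rewrite (imset_f (fun a => cls r a)) ?inE // andbT.
    rewrite negb_or; apply/andP; split; apply/eqP => h.
      by move: xCx; rewrite -h inC (negbTE ax).
    by move: yCy; rewrite -h inC (negbTE ay).
  case/orP => [/eqP -> | /andP [hne /imsetP [a _ Ce]]]; last subst C.
    by exists x => //; rewrite cls' connect0.
  exists a => //; rewrite cls'; case: ifPn => // /orP [ax|ay].
    by move: hne; rewrite (cls_eq _ _ ax) /Cx eqxx.
  by move: hne; rewrite (cls_eq _ _ ay) /Cy eqxx orbT.
rewrite /ncl eK cardsU1 nU cardsD.
have sub2 : [set Cx; Cy] \subset K.
  by apply/subsetP => C; rewrite !inE => /orP [] /eqP ->; apply: imset_f.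
rewrite (setIidPr sub2) cards2 neq.
have : 2 <= #|K|.
  by have := subset_leq_card sub2; rewrite cards2 neq.
rewrite /K. lia.
Qed.

End Merge.
End Gen.


Section Graph.
Variables (T : finType) (e : rel T).
Hypothesis esym : symmetric e.
Hypothesis eirr : irreflexive e.

Lemma set2_eqE (u v x y : T) : x != y ->
  ([set u; v] == [set x; y]) = ((u == x) && (v == y)) || ((u == y) && (v == x)).
Proof.
move=> nxy; apply/eqP/idP => [H|].
  have ux : u \in [set x; y] by rewrite -H set21.
  have vx : v \in [set x; y] by rewrite -H set22.
  have xi : x \in [set u; v] by rewrite H set21.
  have yi : y \in [set u; v] by rewrite H set22.
  move: ux vx xi yi; rewrite !inE.
  case/orP => /eqP -> ; case/orP => /eqP ->; rewrite ?eqxx ?orbT //=.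
  - by rewrite orbb eq_sym (negbTE nxy).
  - by rewrite orbb (negbTE nxy).
case/orP => /andP [/eqP -> /eqP ->] //; exact: setUC.
Qed.

Lemma set2_inj (w : T) : injective (fun v => [set w; v]).
Proof.
move=> u v /= H.
have : v \in [set w; u] by rewrite H set22.
have : u \in [set w; v] by rewrite -H set22.
rewrite !inE => /orP [/eqP ->|/eqP -> //] /orP [/eqP -> //|/eqP -> //].
Qed.

Lemma edgesP f : reflect (exists x y, e x y /\ f = [set x; y]) (f \in edges e).
Proof.
apply: (iffP idP) => [|[x [y [h ->]]]].
  by move=> /imset2P [x y _]; rewrite inE => h ->; exists x, y.
by apply/imset2P; exists x y => //; rewrite inE.
Qed.

Lemma adj_sym (S : {set {set T}}) : symmetric (adj_in S).
Proof. by move=> u v; rewrite /adj_in setUC. Qed.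

Lemma nc_eq (S : {set {set T}}) : S \subset edges e -> n_components e S = ncl (adj_in S).
Proof. by move=> /setIidPl h; rewrite /n_components h. Qed.

Lemma merge_graph (S : {set {set T}}) x y : e x y -> ~~ connect (adj_in S) x y ->
  ncl (adj_in ([set x; y] |: S)) + 1 = ncl (adj_in S).
Proof.
move=> exy nc.
have nxy : x != y by apply: contraTneq exy => ->; rewrite eirr.
apply: (ncl_merge (adj_sym S) nc) => u v.
rewrite /adj_in in_setU1 set2_eqE //.
by rewrite orbC.
Qed.

Lemma adj_in_edge (S : {set {set T}}) x y : [set x; y] \in S -> connect (adj_in S) x y.
Proof. by move=> h; apply: connect1. Qed.

End Graph.


Lemma exists_subset (X : finType) (A : {set X}) k : k <= #|A| ->
  exists N : {set X}, N \subset A /\ #|N| = k.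
Proof.
elim: k => [|k IH] hk; first by exists set0; rewrite sub0set cards0.
have [N [NA cN]] := IH (ltnW hk).
have : 0 < #|A :\: N| by rewrite cardsD (setIidPr NA); lia.
case/card_gt0P => a; rewrite inE => /andP [aN aA].
exists (a |: N); split; first by rewrite subUset sub1set aA NA.
by rewrite cardsU1 aN cN.
Qed.

Section Main.
Variables (T : finType) (e : rel T) (w : T).
Hypothesis esym : symmetric e.
Hypothesis eirr : irreflexive e.
Hypothesis hconn : graph_connected e.
Hypothesis hconn2 : induced_connected e (setT :\ w).

Definition nbrs := [set v | e w v].
Definition star (N : {set T}) : {set {set T}} := [set [set w; v] | v in N].
Local Notation F := (edges_avoiding e w).

Lemma star_sub (N : {set T}) : N \subset nbrs -> star N \subset edges e.
Proof.
move=> /subsetP sN; apply/subsetP => f /imsetP [v vN ->].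
by apply/edgesP; exists w, v; split => //; move: (sN v vN); rewrite inE.
Qed.

Lemma card_star (N : {set T}) : #|star N| = #|N|.
Proof. by rewrite card_imset //; exact: set2_inj. Qed.

Lemma grank_edges : grank e (edges e) = #|T| - 1.
Proof.
rewrite /grank nc_eq // (@ncl_one _ _ w) // => a b.
apply: connect_sub (hconn (in_setT a) (in_setT b)) => u v /andP [euv _].
by apply: connect1; apply/edgesP; exists u, v.
Qed.

Lemma star_forest m (N : {set T}) : #|N| = m -> N \subset nbrs ->
  #|star N| + ncl (adj_in (star N)) = #|T|.
Proof.
elim: m N => [|m IH] N hN sub.
  have -> : N = set0 by apply/eqP; rewrite -cards_eq0 hN.
  rewrite /star imset0 cards0 add0n; apply: ncl_empty => u v.
  by rewrite /adj_in in_set0.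
have : 0 < #|N| by rewrite hN.
case/card_gt0P => v vN.
have vnb : e w v by move/subsetP: sub => /(_ v vN); rewrite inE.
have wv : w != v by apply: contraTneq vnb => ->; rewrite eirr.
set N' := N :\ v.
have cN' : #|N'| = m by move: hN; rewrite (cardsD1 v N) vN; case.
have subN' : N' \subset nbrs by apply: subset_trans sub; apply: subsetDl.
have vN' : v \notin N' by rewrite !inE eqxx.
have eN : N = v |: N' by rewrite setD1K.
have eS : star N = [set w; v] |: star N' by rewrite /star eN imsetU1.
have fn : [set w; v] \notin star N'.
  apply/imsetP => [[u uN hu]].
  by move: vN'; rewrite (set2_inj hu) uN.
have noout : forall z, ~~ adj_in (star N') v z.
  move=> z; apply/imsetP => [[u uN hu]].
  have : v \in [set w; u] by rewrite -hu set21.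
  rewrite !inE => /orP [/eqP vw | /eqP vu].
    by move: wv; rewrite vw eqxx.
  by move: vN'; rewrite vu uN.
have nc : ~~ connect (adj_in (star N')) w v.
  apply/negP => h.
  have h' : connect (adj_in (star N')) v w.
    by rewrite (sym_connect_sym (@adj_sym T (star N'))).
  by move: wv; rewrite (connect_noout noout h') eqxx.
have := merge_graph eirr vnb nc.
have := IH N' cN' subN'.
rewrite eS cardsU1 fn /=. lia.
Qed.

Lemma exists_basis (N : {set T}) : N \subset nbrs -> N != set0 ->
  exists B, is_basis e B /\ #|B :&: F| = #|T| - 1 - #|N|.
Proof.
move=> sub Nn0.
set Phi := [set B : {set {set T}} | [&& star N \subset B, B \subset star N :|: F &
                                       #|B| + ncl (adj_in B) == #|T|]].
have sPhi : star N \in Phi.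
  by rewrite inE subxx subsetUl (star_forest (erefl _) sub) eqxx.
have [B BPhi Bmax] : exists2 B : {set {set T}}, B \in Phi &
    forall j : {set {set T}}, j \in Phi -> #|j| <= #|B|.
  by case: (@arg_maxnP _ (star N) (fun B => B \in Phi) (fun B => #|B|) sPhi) => B; exists B.
move: BPhi; rewrite inE => /and3P [sB Bs /eqP Bc].
have Fsub : F \subset edges e by apply/subsetP => f; rewrite inE => /andP [].
have BE : B \subset edges e.
  by apply: subset_trans Bs _; rewrite subUset Fsub star_sub.
have maxF : forall x y, e x y -> x != w -> y != w -> connect (adj_in B) x y.
  move=> x y exy xw yw; apply/contraT => nc.
  have fn : [set x; y] \notin B by apply: contra nc; exact: adj_in_edge.
  have cU : #|[set x; y] |: B| = #|B|.+1 by rewrite cardsU1 fn.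
  have inPhi : [set x; y] |: B \in Phi.
    rewrite inE; apply/and3P; split.
    - by apply: subset_trans sB _; apply: subsetUr.
    - rewrite subUset Bs andbT sub1set !inE; apply/orP; right.
      apply/andP; split; first by apply/edgesP; exists x, y.
      by rewrite ?inE negb_or ![w == _]eq_sym xw yw.
    - have := merge_graph eirr exy nc.
      rewrite cU; move: Bc => Bc h; apply/eqP; lia.
  have := Bmax _ inPhi; rewrite cU; lia.
case/set0Pn: Nn0 => v0 v0N.
have ev0 : e w v0 by move/subsetP: sub => /(_ v0 v0N); rewrite inE.
have v0w : v0 != w by apply: contraTneq ev0 => ->; rewrite eirr.
have wv0 : adj_in B w v0.
  by apply: (subsetP sB); apply: imset_f.
have allc : forall z, connect (adj_in B) w z.
  move=> z; case: (eqVneq z w) => [-> | zw]; first exact: connect0.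
  apply: connect_trans (connect1 wv0) _.
  have := hconn2 (x := v0) (y := z).
  rewrite !inE v0w zw => /(_ isT isT) h.
  apply: connect_sub h => u v /andP [euv]; rewrite !inE !andbT => /andP [uw vw].
  exact: maxF.
have csym := sym_connect_sym (@adj_sym T B).
have n1 : ncl (adj_in B) = 1.
  apply: (@ncl_one _ _ w) => a b.
  by apply: connect_trans (allc b); rewrite csym.
have cB : #|B| = #|T| - 1 by move: Bc; rewrite n1; lia.
exists B; split.
  by rewrite /is_basis BE grank_edges /grank nc_eq // n1 eqxx andbT /= cB.
have eD : B :\: F = star N.
  apply/eqP; rewrite eqEsubset; apply/andP; split; apply/subsetP => f.
    rewrite inE => /andP [fF fB]; move/subsetP: Bs => /(_ f fB).
    by rewrite inE (negbTE fF) orbF.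
  move=> fs; rewrite inE (subsetP sB f fs) andbT.
  case/imsetP: fs => v _ ->; rewrite inE set21 /= andbF /=.
  done.
have h : #|B :&: F| + #|N| = #|B| by rewrite -(cardsID F B) eD card_star.
lia.
Qed.

End Main.


Section Final.
Variables (T : finType) (e : rel T) (w : T).
Hypothesis esym : symmetric e.
Hypothesis eirr : irreflexive e.
Hypothesis hconn : graph_connected e.
Hypothesis hconn2 : induced_connected e (setT :\ w).
Hypothesis hn : 1 < #|T|.
Local Notation F := (edges_avoiding e w).

Lemma basis_val (B : {set {set T}}) : is_basis e B ->
  exists d, [/\ 0 < d, d <= #|nbrs e w| & #|B :&: F| = #|T| - 1 - d].
Proof.
case/andP => /andP [BE /eqP cB] /eqP gB.
have gB1 : grank e B = #|T| - 1 by rewrite gB (grank_edges w hconn).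
have n1 : ncl (adj_in B) = 1 by move: gB1; rewrite /grank nc_eq //; lia.
have Dsub : B :\: F \subset star w (nbrs e w).
  apply/subsetP => f /setDP [fB fF].
  have fE := subsetP BE f fB.
  have wf : w \in f.
    by apply/negPn; apply: contra fF => wf; rewrite inE; apply/andP.
  case/edgesP: fE => x [y [exy fe]]; subst f.
  move: wf; rewrite !inE => /orP [/eqP wx | /eqP wy].
    by subst x; apply/imsetP; exists y; first by rewrite inE.
  by subst y; apply/imsetP; exists x; [rewrite inE esym | exact: setUC].
have [z zw] : exists z, z != w.
  have := cardsD1 w [set: T]; rewrite in_setT cardsT => h.
  have : 0 < #|[set: T] :\ w| by lia.
  by case/card_gt0P => z; rewrite !inE andbT => zw; exists z.
have nz : 0 < #|B :\: F|.
  case/connectP: (@ncl_one_conn _ (adj_in B) w z n1) => [[|c p]] /=.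
    by move=> _ zE; move: zw; rewrite zE eqxx.
  case/andP => wc _ _; apply/card_gt0P; exists [set w; c].
  apply/setDP; split => //; apply/negP; rewrite inE => /andP [_].
  by rewrite !inE eqxx.
exists #|B :\: F|; split => //.
  by apply: leq_trans (subset_leq_card Dsub) _; rewrite card_star.
have h : #|B :&: F| + #|B :\: F| = #|B| := cardsID F B.
lia.
Qed.

Lemma levels : num_levels e F = #|nbrs e w|.
Proof.
have Dle : #|nbrs e w| <= #|T| - 1.
  have : nbrs e w \subset [set: T] :\ w.
    by apply/subsetP => v; rewrite !inE andbT; apply: contraTneq => ->; rewrite eirr.
  move/subset_leq_card; have := cardsD1 w [set: T]; rewrite in_setT cardsT; lia.
set s := [seq #|B :&: F| | B <- enum (is_basis e)].
have key : forall m, (m \in s) = (m \in iota (#|T| - 1 - #|nbrs e w|) #|nbrs e w|).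
  move=> m; rewrite mem_iota; apply/mapP/idP.
    case=> B; rewrite mem_enum => hB ->.
    have [d [d0 dD ->]] := basis_val hB; apply/andP; split; lia.
  move=> /andP [h1 h2].
  have dle : #|T| - 1 - m <= #|nbrs e w| by lia.
  have [N [sN cN]] := exists_subset dle.
  have Nn0 : N != set0 by rewrite -card_gt0 cN; lia.
  have [B [hB hc]] := exists_basis eirr hconn hconn2 sN Nn0.
  by exists B; rewrite ?mem_enum //; rewrite hc cN; lia.
rewrite /num_levels -/s.
have := uniq_perm (undup_uniq s) (iota_uniq _ _) (fun m => etrans (mem_undup s m) (key m)).
by move/perm_size ->; rewrite size_iota.
Qed.

End Final.

Unset Implicit Arguments.

Theorem proposition5p4 (T : finType) (e : rel T) (w : T) (k : nat) :
  simple_graph e -> biconnected e ->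
  is_flacet e (edges_avoiding e w) ->
  (k_level e (edges_avoiding e w) k <-> degree e w = k).
Proof.
move=> [esym eirr] [hconn hconn2] [Fn0 _ _ _ _].
have hn : 1 < #|T|.
  case/set0Pn: Fn0 => f; rewrite inE => /andP [/edgesP [x [y [exy _]]] _].
  have nxy : x != y by apply: contraTneq exy => ->; rewrite eirr.
  by have := max_card [set x; y]; rewrite cards2 nxy.
rewrite /k_level (levels esym eirr hconn (hconn2 w) hn).
by [].
Qed.
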